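(* Let $E$ be a real topological vector space, $f:E\to\mathbb{R}$ and $x\in E$. If $f$ is $D^-_M$-differentiable at $x$, then $D^-_Mf(x):E\to\mathbb{R}$ is a superlinear functional, and $D^-f(x)$ is superlinear if and only if $D^-f(x)=D^-_Mf(x)$. Similarly, if $f$ is $D^+_M$-differentiable at $x$, then $D^+_Mf(x)$ is a sublinear functional, and $D^+f(x)$ is sublinear if and only if $D^+f(x)=D^+_Mf(x)$.
   Context: $D^-f(x)(u):=\liminf_{t\to0^+}\frac{f(x+tu)-f(x)}{t}$ and $D^+f(x)(u):=\limsup_{t\to0^+}\frac{f(x+tu)-f(x)}{t}$, with $D^-f(x)(0)=D^+f(x)(0)=0$. $D^-_Mf(x)(u):=\inf_{w\in E}\{D^-f(x)(u+w)-D^-f(x)(w)\}$ and $D^+_Mf(x)(u):=\sup_{w\in E}\{D^+f(x)(u+w)-D^+f(x)(w)\}$. $f$ is $D^-_M$-differentiable (resp. $D^+_M$-differentiable) at $x$ if $D^-_Mf(x)(u)$ and $D^-f(x)(u)$ (resp. $D^+_Mf(x)(u)$ and $D^+f(x)(u)$) are finite for all $u\in E$. A map $p:E\to\mathbb{R}$ is sublinear if $p(x+y)\le p(x)+p(y)$ and $p(\lambda x)=\lambda p(x)$ for all $x,y\in E$, $\lambda\ge0$; superlinear if $-p$ is sublinear. *)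

(* Defs.v *)
From HB Require Import structures.
From mathcomp Require Import all_boot all_order all_algebra.
From mathcomp Require Import all_classical all_reals all_analysis.
Set Implicit Arguments. Unset Strict Implicit. Unset Printing Implicit Defensive.
Import Order.TTheory GRing.Theory Num.Theory.
Local Open Scope ring_scope.
Local Open Scope classical_set_scope.

Section Dini.
Variables (R : realType) (E : topologicalLmodType R).

Definition dini_lower (f : E -> R) (x u : E) : \bar R :=
  if u == 0 then 0%E
  else @limf_einf R R^o R (fun t : R => ((f (x + t *: u) - f x) / t)%:E) (0^'+).

Definition dini_upper (f : E -> R) (x u : E) : \bar R :=
  if u == 0 then 0%E
  else @limf_esup R R^o R (fun t : R => ((f (x + t *: u) - f x) / t)%:E) (0^'+).

Definition dini_lowerM (f : E -> R) (x u : E) : \bar R :=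
  ereal_inf [set (dini_lower f x (u + w)%R - dini_lower f x w)%E | w in [set: E]].

Definition dini_upperM (f : E -> R) (x u : E) : \bar R :=
  ereal_sup [set (dini_upper f x (u + w)%R - dini_upper f x w)%E | w in [set: E]].

Definition lowerM_differentiable (f : E -> R) (x : E) : Prop :=
  forall u, (dini_lowerM f x u \is a fin_num) /\ (dini_lower f x u \is a fin_num).

Definition upperM_differentiable (f : E -> R) (x : E) : Prop :=
  forall u, (dini_upperM f x u \is a fin_num) /\ (dini_upper f x u \is a fin_num).

(* sublinear / superlinear extended-real-valued functionals (values are finite
   in all uses below) *)
Definition sublinear (p : E -> \bar R) : Prop :=
  (forall y z : E, (p (y + z)%R <= p y + p z)%E) /\
  (forall (l : R) (y : E), 0 <= l -> p (l *: y)%R = (l%:E * p y)%E).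

Definition superlinear (p : E -> \bar R) : Prop :=
  sublinear (fun y => - p y)%E.

End Dini.

(* Main.v *)
Require Import Defs.
From HB Require Import structures.
From mathcomp Require Import all_boot all_order all_algebra.
From mathcomp Require Import all_classical all_reals all_analysis.
From mathcomp Require Import lra ring.
Import Order.TTheory GRing.Theory Num.Theory.
Local Open Scope ring_scope.
Local Open Scope classical_set_scope.

Section Abs.
Variables (R : realType) (E : topologicalLmodType R).
Local Open Scope ereal_scope.

Definition infM (g : E -> \bar R) (u : E) : \bar R :=
  ereal_inf [set (g (u + w)%R - g w)%E | w in [set: E]].

Variable g : E -> \bar R.
Hypothesis gfin : forall u, g u \is a fin_num.
Hypothesis g0 : g 0%R = 0.
Hypothesis ghom : forall (l : R) u, (0 < l)%R -> g (l *: u)%R = l%:E * g u.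
Hypothesis Mfin : forall u, infM g u \is a fin_num.

Let gE u : g u = (fine (g u))%:E.
Proof. by rewrite fineK. Qed.
Let ME u : infM g u = (fine (infM g u))%:E.
Proof. by rewrite fineK. Qed.

Lemma infM_lb u w : infM g u <= g (u + w)%R - g w.
Proof. by apply: ereal_inf_lbound; exists w. Qed.

Lemma infM_superadd y z : infM g y + infM g z <= infM g (y + z)%R.
Proof.
apply/ereal_infP => _ [w _ <-].
have h1 := infM_lb y (z + w)%R.
have h2 := infM_lb z w.
move: h1 h2; rewrite addrA (ME y) (ME z) (gE (y + z + w)%R) (gE (z + w)%R) (gE w).
rewrite -!EFinB !lee_fin => h1 h2.
lra.
Qed.

Lemma infM0 : infM g 0%R = 0.
Proof.
apply/eqP; rewrite eq_le; apply/andP; split.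
  by have := infM_lb 0%R 0%R; rewrite addr0 g0 sube0.
apply/ereal_infP => _ [w _ <-]; rewrite add0r (gE w) -EFinB subrr.
by [].
Qed.

Lemma infM_hom (l : R) u : (0 < l)%R -> infM g (l *: u)%R = l%:E * infM g u.
Proof.
move=> l0; rewrite /infM -ereal_inf_pZl //; congr ereal_inf.
have lne : l != 0%R by rewrite gt_eqF.
apply/seteqP; split.
- move=> _ /= [w _ <-]; exists (g (u + l^-1 *: w)%R - g (l^-1 *: w)%R) => //; first by exists (l^-1 *: w)%R.
  rewrite -[in RHS](scalerKV lne w) -scalerDr !ghom ?invr_gt0 //.
  rewrite (gE (u + l^-1 *: w)%R) (gE w) -!EFinM -!EFinB. by rewrite mulrBr.
- move=> _ /= [_ [w _ <-] <-].
  rewrite (gE (u + w)%R) (gE w) -EFinB -EFinM.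
  exists (l *: w)%R => //; rewrite -scalerDr !ghom //.
  rewrite (gE (u + w)%R) (gE w) -!EFinM -EFinB mulrBr //.
Qed.

Lemma infM_superlinear : superlinear (infM g).
Proof.
split.
  move=> y z; rewrite -oppeD ?fin_num_adde_defl ?Mfin //. rewrite leeN2; exact: infM_superadd.
move=> l y; rewrite le_eqVlt => /predU1P [<-|l0].
  by rewrite scale0r infM0 mul0e oppe0.
by rewrite (infM_hom l y l0) [RHS]muleN.
Qed.

Lemma superlinear_iff : superlinear g <-> g = infM g.
Proof.
split; last by move=> h; rewrite h; exact: infM_superlinear.
move=> [sadd _]; apply/funext => u; apply/eqP; rewrite eq_le; apply/andP; split.
  apply/ereal_infP => _ [w _ <-].
  have := sadd u w; rewrite (gE u) (gE w) (gE (u + w)%R) -!EFinN -EFinD -EFinB !lee_fin; lra.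
by have := infM_lb u 0%R; rewrite addr0 g0 sube0.
Qed.
End Abs.
Section Lim.
Variable R : realType.

Lemma at_right_scale (l : R) (W : set R) : 0 < l -> (0^'+) W -> (0^'+) [set t | W (l * t)].
Proof.
move=> l0 /nbhs_ballP [e e0 He]; apply/nbhs_ballP; exists (e / l); first exact: divr_gt0.
move=> t Bt t0; apply: He; last exact: mulr_gt0.
move: Bt; rewrite /ball /= !sub0r !normrN normrM (gtr0_norm l0) ltr_pdivlMr //.
by rewrite mulrC.
Qed.

Local Open Scope ereal_scope.
Lemma limf_esup_scale (G : R -> \bar R) (l : R) : (0 < l)%R ->
  @limf_esup R R^o R (fun t : R => l%:E * G (l * t)%R) (0^'+) =
  l%:E * @limf_esup R R^o R G (0^'+).
Proof.
move=> l0; have lne : l != 0%R by rewrite gt_eqF.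
rewrite /limf_esup -ereal_inf_pZl //; congr ereal_inf; apply/seteqP; split.
- move=> _ [V FV <-]; exists (ereal_sup (G @` [set (l * t)%R | t in V])).
    exists [set (l * t)%R | t in V] => //.
    have li0 : (0 < l^-1)%R by rewrite invr_gt0.
    apply: (filterS _ (@at_right_scale _ _ li0 FV)) => t /= Vt.
    by exists (l^-1 * t)%R => //; rewrite mulrA mulfV // mul1r.
  rewrite -ereal_sup_pZl //; congr ereal_sup; apply/seteqP; split.
    by move=> _ [_ [_ [t Vt <-] <-] <-]; exists t.
  by move=> _ [t Vt <-]; exists (G (l * t)%R) => //; exists (l * t)%R => //; exists t.
- move=> _ [_ [W FW <-] <-]; exists [set t | W (l * t)%R]; first exact: at_right_scale.
  rewrite -ereal_sup_pZl //; congr ereal_sup; apply/seteqP; split.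
    by move=> _ [t Wt <-]; exists (G (l * t)%R) => //; exists (l * t)%R.
  move=> _ [_ [y Wy <-] <-]; exists (l^-1 * y)%R => /=; rewrite mulrA mulfV // mul1r //.
Qed.
End Lim.

Section Hom.
Variables (R : realType) (E : topologicalLmodType R).
Local Open Scope ereal_scope.

Let key (l t a : R) : l != 0%R -> (a / t = l * (a / (l * t)))%R.
Proof. move=> lne; rewrite invfM; set s := (t^-1)%R; field; exact: lne. Qed.

Lemma dini_lower_hom (f : E -> R) x (l : R) u : (0 < l)%R ->
  dini_lower f x (l *: u)%R = l%:E * dini_lower f x u.
Proof.
move=> l0; have lne : l != 0%R by rewrite gt_eqF.
rewrite /dini_lower scaler_eq0 (negbTE lne) /=.
case: eqP => _; first by rewrite mule0.
rewrite /limf_einf [RHS]muleN -limf_esup_scale //; congr (- limf_esup _ _).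
apply/funext => t /=; rewrite scalerA [(t * l)%R]mulrC -EFinM; congr EFin.
by rewrite mulrN -key.
Qed.

Lemma dini_upper_hom (f : E -> R) x (l : R) u : (0 < l)%R ->
  dini_upper f x (l *: u)%R = l%:E * dini_upper f x u.
Proof.
move=> l0; have lne : l != 0%R by rewrite gt_eqF.
rewrite /dini_upper scaler_eq0 (negbTE lne) /=.
case: eqP => _; first by rewrite mule0.
rewrite -limf_esup_scale //; congr (limf_esup _ _).
apply/funext => t /=; rewrite scalerA [(t * l)%R]mulrC -EFinM; congr EFin.
by rewrite -key.
Qed.
End Hom.

Lemma oppe_sub_fin (R : realType) (a b : \bar R) : a \is a fin_num -> b \is a fin_num ->
  (- (- a - - b) = a - b)%E.
Proof. by case: a b => [a| |] [b| |] //= _ _; rewrite opprD !opprK. Qed.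

Theorem proposition2p2 (R : realType) (E : topologicalLmodType R)
  (f : E -> R) (x : E) :
  (lowerM_differentiable f x ->
     superlinear (dini_lowerM f x) /\
     (superlinear (dini_lower f x) <-> dini_lower f x = dini_lowerM f x)) /\
  (upperM_differentiable f x ->
     sublinear (dini_upperM f x) /\
     (sublinear (dini_upper f x) <-> dini_upper f x = dini_upperM f x)).
Proof.
split.
  move=> H.
  have gfin u : dini_lower f x u \is a fin_num by exact: (H u).2.
  have Mfin u : infM R E (dini_lower f x) u \is a fin_num by exact: (H u).1.
  have g0 : dini_lower f x 0 = 0%E by rewrite /dini_lower eqxx.
  have gh := @dini_lower_hom R E f x.
  split.
    by apply: (@infM_superlinear R E (dini_lower f x)).
  by apply: (@superlinear_iff R E (dini_lower f x)).
move=> H.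
pose gn := fun v => (- dini_upper f x v)%E.
have gfin u : gn u \is a fin_num by rewrite /gn fin_numN; exact: (H u).2.
have g0 : gn 0 = 0%E by rewrite /gn /dini_upper eqxx oppe0.
have gh l u : (0 < l)%R -> gn (l *: u) = (l%:E * gn u)%E.
  by move=> l0; rewrite /gn dini_upper_hom // muleN.
have key u : dini_upperM f x u = (- infM R E gn u)%E.
  rewrite /dini_upperM /infM /ereal_inf oppeK image_comp; congr ereal_sup.
  apply: eq_imagel => w _ /=; by rewrite /gn oppe_sub_fin //; exact: (H _).2.
have Mfin u : infM R E gn u \is a fin_num.
  by rewrite -[infM R E gn u]oppeK -key fin_numN; exact: (H u).1.
have KE : dini_upperM f x = (fun u => - infM R E gn u)%E by apply/funext => u; exact: key.
have GE : (fun y => - gn y)%E = dini_upper f x by apply/funext => u; rewrite /gn oppeK.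
rewrite KE; split.
  by apply: (@infM_superlinear R E gn).
have iff := @superlinear_iff R E gn gfin g0 gh Mfin.
rewrite /superlinear GE in iff.
split.
  move=> /iff eq; rewrite -GE; apply/funext => u; by rewrite -eq.
move=> eq; apply/iff; apply/funext => u; transitivity (- dini_upper f x u)%E => //; by rewrite eq oppeK.
Qed.
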